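(* $\displaystyle\int_{\alpha}^{\infty}\left[u - \cosh^{-1}(\sinh u)\right]\,du = \frac{\pi^2}{16} - \frac12\ln^2\!\left(1+\sqrt{2}\right)$, where $\alpha = \sinh^{-1}(1) = \ln(1+\sqrt{2})$.
   Context: $\sinh^{-1}x = \ln\!\left(x+\sqrt{x^2+1}\right)$ for all real $x$, and $\cosh^{-1}x := \ln\!\left(x+\sqrt{x^2-1}\right)$ for real $x \ge 1$ (the inverse of $\cosh$ restricted to $[0,\infty)$). *)

(* Defs.v *)
From Stdlib Require Import Reals.
From Coquelicot Require Import Coquelicot.
Open Scope R_scope.

Definition arsinh (x : R) : R := ln (x + sqrt (x ^ 2 + 1)).
Definition arcosh (x : R) : R := ln (x + sqrt (x ^ 2 - 1)).

(* Main.v *)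
Require Import Defs.
From Stdlib Require Import Reals.
From Coquelicot Require Import Coquelicot.
Open Scope R_scope.
From Stdlib Require Import Lra Psatz.

Lemma asin_deriv y : -1 < y < 1 -> is_derive asin y (/ sqrt (1 - y²)).
Proof.
  intros Hy. apply is_derive_Reals.
  apply (derive_pt_eq_1 _ _ _ (derivable_pt_asin y Hy)).
  rewrite derive_pt_asin. unfold Rdiv; ring.
Qed.

Lemma asin_le a b : -1 <= a -> a <= b -> b <= 1 -> asin a <= asin b.
Proof.
  intros Ha Hab Hb.
  destruct (Rle_or_lt (asin a) (asin b)) as [H|H]; auto.
  pose proof (asin_bound a). pose proof (asin_bound b).
  assert (sin (asin b) < sin (asin a)).
  { apply sin_increasing_1; lra. }
  rewrite !sin_asin in H2 by lra. lra.
Qed.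

Lemma asin_cont y : -1 < y < 1 -> continuous asin y.
Proof.
  intros Hy. apply (ex_derive_continuous (K:=R_AbsRing) (V:=R_NormedModule)). eexists. apply asin_deriv; auto.
Qed.


Definition dSf (k x : R) := sin x * / sqrt (1 - (k * sin x)²).
Definition S (k : R) := RInt (fun x => asin (k * sin x)) 0 (PI/2).

Lemma ksin_bound k x : -1 < k < 1 -> -1 < k * sin x < 1.
Proof.
  intros Hk. pose proof (SIN_bound x) as Hs.
  assert (Rabs (k*sin x) < 1).
  { rewrite Rabs_mult. assert (Rabs (sin x) <= 1) by (apply Rabs_le; lra).
    assert (Rabs k < 1) by (apply Rabs_def1; lra).
    pose proof (Rabs_pos (sin x)). pose proof (Rabs_pos k). nra. }
  apply Rabs_def2 in H. lra.
Qed.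

Lemma Sf_deriv k x : -1 < k < 1 -> is_derive (fun z => asin (z * sin x)) k (dSf k x).
Proof.
  intros Hk.
  assert (H := is_derive_comp asin (fun z => z * sin x) k (/ sqrt (1 - (k * sin x)²)) (sin x)).
  unfold dSf. simpl in H. unfold scal in H; simpl in H; unfold mult in H; simpl in H.
  apply H. apply asin_deriv, ksin_bound; auto.
  auto_derive; auto; ring.
Qed.

Lemma locally_interval a b k : a < k < b -> locally k (fun y => a < y < b).
Proof.
  intros Hk. apply (open_and _ _ (open_gt a) (open_lt b)). simpl. lra.
Qed.

Lemma cont_2d_of (f : R -> R -> R) x y :
  continuous (fun z : R * R => f (fst z) (snd z)) (x, y) -> continuity_2d_pt f x y.
Proof. intros H. apply continuity_2d_pt_filterlim. exact H. Qed.

Lemma cont_sin_snd (x : R * R) : continuous (fun z : R * R => sin (snd z)) x.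
Proof.
  destruct x as [a b].
  apply (continuous_comp (fun z : R*R => snd z) sin). apply continuous_snd. apply continuous_sin.
Qed.

Lemma dSf_cont k t : -1 < k < 1 -> continuity_2d_pt dSf k t.
Proof.
  intros Hk. apply cont_2d_of. unfold dSf.
  apply (continuous_mult (K:=R_AbsRing) (fun z : R*R => sin (snd z)) (fun z => / sqrt (1 - (fst z * sin (snd z))²))).
  - apply cont_sin_snd.
  - apply (continuous_comp (fun z : R*R => sqrt (1 - (fst z * sin (snd z))²)) (fun y => / y)).
    apply (continuous_comp (fun z : R*R => (1 - (fst z * sin (snd z))²)) sqrt).
      unfold Rsqr.
      apply (continuous_plus (V:=R_NormedModule) (fun _ => 1) (fun z : R*R => - ((fst z * sin (snd z)) * (fst z * sin (snd z))))).
      * apply continuous_const.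
      * apply (continuous_opp (V:=R_NormedModule) (fun z : R*R => ((fst z * sin (snd z)) * (fst z * sin (snd z))))).
        apply (continuous_mult (K:=R_AbsRing) (fun z : R*R => (fst z * sin (snd z))) (fun z : R*R => (fst z * sin (snd z))));
        apply (continuous_mult (K:=R_AbsRing) (fun z : R*R => fst z) (fun z : R*R => sin (snd z)));
        try apply continuous_fst; apply cont_sin_snd.
      * apply continuous_sqrt.
      * apply continuous_Rinv. simpl. apply Rgt_not_eq. apply sqrt_lt_R0.
        pose proof (ksin_bound k t Hk). unfold Rsqr. nra.
Qed.

Lemma Sf_ex_RInt y : -1 < y < 1 -> ex_RInt (fun t => asin (y * sin t)) 0 (PI/2).
Proof.
  intros Hy. apply (ex_RInt_continuous (V:=R_CompleteNormedModule)).
  intros z _.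
  apply (continuous_comp (fun t => y * sin t) asin).
  - apply (continuous_mult (K:=R_AbsRing) (fun _ => y) sin). apply continuous_const. apply continuous_sin.
  - apply asin_cont, ksin_bound; auto.
Qed.

Lemma S_deriv k : -1 < k < 1 -> is_derive S k (RInt (dSf k) 0 (PI/2)).
Proof.
  intros Hk. unfold S.
  assert (Hd : is_derive (fun x0 => RInt (fun t => asin (x0 * sin t)) 0 (PI/2)) k
             (RInt (fun t => Derive (fun u => asin (u * sin t)) k) 0 (PI/2))).
  { apply (is_derive_RInt_param (fun u t => asin (u * sin t))).
    - apply (filter_imp (fun y => -1 < y < 1)). 2: apply locally_interval; auto.
      intros y Hy t _. eexists. apply Sf_deriv; auto.
    - intros t _.
      apply (continuity_2d_pt_ext_loc dSf).
      + exists (mkposreal _ (Rmin_pos (1 - k) (1 + k) ltac:(lra) ltac:(lra))).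
        intros u v Hu _. simpl in Hu.
        assert (Hu' : -1 < u < 1).
        { apply Rabs_def2 in Hu. pose proof (Rmin_l (1-k) (1+k)). pose proof (Rmin_r (1-k) (1+k)). lra. }
        symmetry. apply is_derive_unique. apply Sf_deriv; auto.
      + apply dSf_cont; auto.
    - apply (filter_imp (fun y => -1 < y < 1)). 2: apply locally_interval; auto.
      intros y Hy. apply Sf_ex_RInt; auto. }
  eapply is_derive_ext. { intros; reflexivity. }
  replace (RInt (dSf k) 0 (PI/2)) with (RInt (fun t => Derive (fun u => asin (u * sin t)) k) 0 (PI/2)).
  exact Hd.
  apply RInt_ext. intros x _. apply is_derive_unique. apply Sf_deriv; auto.
Qed.


Lemma ln_sqrt x : 0 < x -> ln (sqrt x) = ln x / 2.
Proof.
  intros Hx. assert (Hs := sqrt_lt_R0 x Hx).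
  rewrite <- (sqrt_sqrt x) at 2 by lra. rewrite ln_mult by lra. field.
Qed.

Definition L (t : R) := ln (1 + t) - ln (1 - t).

Lemma dS_val k : 0 < k < 1 -> RInt (dSf k) 0 (PI/2) = L k / (2 * k).
Proof.
  intros Hk.
  set (A := fun x => - / k * ln (k * cos x + sqrt (1 - (k * sin x) * (k * sin x)))).
  assert (Hpos : forall x, 0 < 1 - (k * sin x) * (k * sin x)).
  { intros x. pose proof (ksin_bound k x ltac:(lra)). nra. }
  assert (HI : is_RInt (dSf k) 0 (PI/2) (minus (A (PI/2)) (A 0))).
  { apply (is_RInt_derive (V:=R_CompleteNormedModule)).
    - intros x Hx. rewrite Rmin_left, Rmax_right in Hx by (pose proof PI_RGT_0; lra).
      assert (Hc : 0 <= cos x) by (apply cos_ge_0; pose proof PI_RGT_0; lra).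
      assert (Hs := sqrt_lt_R0 _ (Hpos x)).
      unfold A. auto_derive.
      + replace (1 + - (k * sin x * (k * sin x))) with (1 - k * sin x * (k * sin x)) by ring.
        split. apply Hpos. split; auto. nra.
      + unfold dSf, Rsqr. 
        replace (1 + - (k * sin x * (k * sin x))) with (1 - k * sin x * (k * sin x)) by ring.
        set (s := sqrt (1 - k * sin x * (k * sin x))) in *.
        assert (Hss : s * s = 1 - (k * sin x) * (k * sin x)) by (apply sqrt_sqrt; left; auto).
        field_simplify_eq. 2:{ repeat split; try lra; nra. } reflexivity.
    - intros x _. unfold dSf.
      apply (continuous_mult (K:=R_AbsRing) sin (fun x => / sqrt (1 - (k * sin x)²))).
      apply continuous_sin.
      apply continuous_Rinv_comp. apply continuous_sqrt_comp.
      unfold Rsqr.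
      apply (continuous_plus (V:=R_NormedModule) (fun _ => 1) (fun x => - ((k * sin x) * (k * sin x)))).
      apply continuous_const.
      apply (continuous_opp (V:=R_NormedModule) (fun x => ((k * sin x) * (k * sin x)))).
      apply (continuous_mult (K:=R_AbsRing) (fun x => (k * sin x)) (fun x => (k * sin x)));
        apply (continuous_mult (K:=R_AbsRing) (fun x => k) sin); try apply continuous_const; apply continuous_sin.
      apply Rgt_not_eq, sqrt_lt_R0. unfold Rsqr. apply Hpos. }
  apply (is_RInt_unique (V:=R_CompleteNormedModule)) in HI. rewrite HI. unfold minus, plus, opp; simpl.
  unfold A. rewrite cos_PI2, sin_PI2, cos_0, sin_0.
  replace (k * 0 + sqrt (1 - k * 1 * (k * 1))) with (sqrt ((1 - k) * (1 + k))) by (rewrite Rmult_0_r, Rplus_0_l; f_equal; ring).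
  replace (k * 1 + sqrt (1 - k * 0 * (k * 0))) with (1 + k).
  2:{ replace (1 - k * 0 * (k * 0)) with 1 by ring. rewrite sqrt_1. ring. }
  rewrite ln_sqrt by nra. rewrite ln_mult by lra. unfold L. field. lra.
Qed.


Lemma S_deriv' k : 0 < k < 1 -> is_derive S k (L k / (2 * k)).
Proof. intros Hk. rewrite <- dS_val by auto. apply S_deriv. lra. Qed.

Definition Lam (x : R) := S x + S ((1 - x) / (1 + x)) - / 2 * ln x * L x.

Lemma L_dual x : 0 < x < 1 -> L ((1 - x) / (1 + x)) = - ln x.
Proof.
  intros Hx. unfold L.
  replace (1 + (1 - x) / (1 + x)) with (2 / (1 + x)) by (field; lra).
  replace (1 - (1 - x) / (1 + x)) with (x * (2 / (1 + x))) by (field; lra).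
  rewrite ln_mult. ring. lra. apply Rdiv_lt_0_compat; lra.
Qed.

Lemma Lam_deriv x : 0 < x < 1 -> is_derive Lam x 0.
Proof.
  intros Hx.
  set (x' := (1 - x) / (1 + x)).
  assert (Hx' : 0 < x' < 1).
  { unfold x'. split. apply Rdiv_lt_0_compat; lra.
    apply Rmult_lt_reg_r with (1 + x). lra. unfold Rdiv. rewrite Rmult_assoc, Rinv_l by lra. lra. }
  assert (H1 := S_deriv' x Hx).
  assert (H2 : is_derive (fun y => S ((1 - y) / (1 + y))) x
                 ((-2 / (1 + x)^2) * (L x' / (2 * x')))).
  { apply (is_derive_comp S (fun y => (1 - y) / (1 + y)) x (L x' / (2 * x')) (-2 / (1+x)^2)).
    apply S_deriv'. exact Hx'.
    auto_derive. lra. field. lra. }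
  assert (H3 : is_derive (fun y => / 2 * ln y * L y) x
                 (/ 2 * (/ x) * L x + / 2 * ln x * (/ (1 + x) + / (1 - x)))).
  { unfold L. auto_derive. repeat split; lra. unfold Rminus. field. lra. }
  assert (H := is_derive_minus _ _ x _ _ (is_derive_plus _ _ x _ _ H1 H2) H3).
  unfold Lam. eapply is_derive_ext. { intros t. reflexivity. }
  replace 0 with (minus (plus (L x / (2 * x)) (-2 / (1 + x)^2 * (L x' / (2 * x'))))
                (/ 2 * (/ x) * L x + / 2 * ln x * (/ (1 + x) + / (1 - x)))).
  exact H.
  unfold minus, plus, opp; simpl. unfold x'. rewrite L_dual by auto. fold x'.
  unfold x'. field. lra.
Qed.


Lemma Lam_const x y : 0 < x < 1 -> 0 < y < 1 -> Lam x = Lam y.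
Proof.
  intros Hx Hy.
  destruct (MVT_gen Lam x y (fun _ => 0)) as [z [Hz E]].
  - intros t Ht. apply Lam_deriv.
    pose proof (Rmin_l x y). pose proof (Rmin_r x y). pose proof (Rmax_l x y). pose proof (Rmax_r x y).
    destruct (Rle_dec x y); [rewrite Rmin_left, Rmax_right in Ht by lra | rewrite Rmin_right, Rmax_left in Ht by lra]; lra.
  - intros t Ht. apply continuity_pt_filterlim.
    apply (ex_derive_continuous (K:=R_AbsRing) (V:=R_NormedModule)). eexists. apply Lam_deriv.
    destruct (Rle_dec x y); [rewrite Rmin_left, Rmax_right in Ht by lra | rewrite Rmin_right, Rmax_left in Ht by lra]; lra.
  - lra.
Qed.

Lemma ln_le_minus1 x : 0 < x -> ln x <= x - 1.
Proof. intros Hx. pose proof (exp_ineq1_le (ln x)). rewrite exp_ln in H by lra. lra. Qed.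

Lemma log_term_bound x : 0 < x <= / 2 -> Rabs (/ 2 * ln x * L x) <= 3 * sqrt x.
Proof.
  intros Hx.
  set (s := sqrt x).
  assert (Hs : 0 < s) by (apply sqrt_lt_R0; lra).
  assert (Hss : s * s = x) by (apply sqrt_sqrt; lra).
  assert (Hlnx : ln x = 2 * ln s).
  { rewrite <- Hss, ln_mult by lra. ring. }
  assert (Hlns : - ln s <= / s - 1).
  { rewrite <- ln_Rinv by lra. apply ln_le_minus1. apply Rinv_0_lt_compat; lra. }
  assert (Hlnneg : ln x < 0).
  { rewrite <- ln_1. apply ln_increasing; lra. }
  assert (HL1 : ln (1 + x) <= x) by (pose proof (ln_le_minus1 (1+x)); lra).
  assert (HL2 : - ln (1 - x) <= 2 * x).
  { rewrite <- ln_Rinv by lra. pose proof (ln_le_minus1 (/ (1 - x)) ltac:(apply Rinv_0_lt_compat; lra)).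
    assert (/ (1 - x) - 1 <= 2 * x).
    { replace (/ (1 - x) - 1) with (x / (1 - x)) by (field; lra).
      apply Rmult_le_reg_r with (1 - x). lra. unfold Rdiv. rewrite Rmult_assoc, Rinv_l by lra. nra. }
    lra. }
  assert (HL0 : 0 <= L x).
  { unfold L. assert (ln (1 - x) < ln (1 + x)) by (apply ln_increasing; lra). lra. }
  assert (HLx : L x <= 3 * x) by (unfold L; lra).
  rewrite Rabs_left1.
  2:{ assert (0 <= - ln x * L x) by (apply Rmult_le_pos; lra). nra. }
  assert (Hinv : / s * s = 1) by (field; lra).
  (* -(1/2) ln x L x = - ln s * L x <= (/s - 1) * 3 x <= 3 x / s = 3 s *)
  assert (- (/ 2 * ln x * L x) = (- ln s) * L x) by (rewrite Hlnx; field).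
  rewrite H.
  assert ((- ln s) * L x <= (/ s) * (3 * x)).
  { assert (0 < / s) by (apply Rinv_0_lt_compat; lra).
    apply Rmult_le_compat; lra. }
  assert (/ s * (3 * x) = 3 * s) by (rewrite <- Hss; field; lra).
  lra.
Qed.


Lemma RInt_id_shift d : RInt (fun x => x - d) 0 (PI/2) = PI^2/8 - PI/2 * d.
Proof.
  apply (is_RInt_unique (V:=R_CompleteNormedModule)).
  replace (PI^2/8 - PI/2*d) with (minus ((fun x => x^2/2 - d*x) (PI/2)) ((fun x => x^2/2 - d*x) 0)).
  2:{ unfold minus, plus, opp; simpl. field. }
  apply (is_RInt_derive (V:=R_CompleteNormedModule) (fun x => x^2/2 - d*x)).
  - intros x _. auto_derive; auto. field.
  - intros x _. apply (continuous_plus (V:=R_NormedModule) (fun x => x) (fun _ => - d)).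
    apply continuous_id. apply continuous_const.
Qed.

Lemma S_bounds y d : 0 <= d <= PI/2 -> cos d <= y < 1 ->
  PI^2/8 - PI/2 * d <= S y <= PI^2/8.
Proof.
  intros Hd Hy. pose proof PI_RGT_0.
  assert (Hc : 0 <= cos d) by (apply cos_ge_0; lra).
  assert (Hy' : -1 < y < 1) by lra.
  unfold S. split.
  - rewrite <- RInt_id_shift. apply RInt_le. lra.
    apply (ex_RInt_continuous (V:=R_CompleteNormedModule)). intros; apply (continuous_plus (V:=R_NormedModule) (fun x => x) (fun _ => - d)).
    apply continuous_id. apply continuous_const.
    apply Sf_ex_RInt; auto.
    intros x Hx.
    assert (Hsx : 0 <= sin x) by (apply sin_ge_0; lra).
    destruct (Rle_dec x d).
    + assert (asin 0 <= asin (y * sin x)) by (apply asin_le; try lra; pose proof (SIN_bound x); nra).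
      rewrite asin_0 in *. lra.
    + assert (sin (x - d) <= y * sin x).
      { rewrite sin_minus. assert (0 <= cos x) by (apply cos_ge_0; lra).
        assert (0 <= sin d) by (apply sin_ge_0; lra). nra. }
      assert (Ha : asin (sin (x - d)) <= asin (y * sin x)).
      { pose proof (SIN_bound x). pose proof (SIN_bound (x - d)).
        apply asin_le; try lra. nra. }
      rewrite asin_sin in Ha by lra. lra.
  - replace (PI^2/8) with (RInt (fun x => x - 0) 0 (PI/2)) by (rewrite RInt_id_shift, Rmult_0_r; unfold Rminus; rewrite Ropp_0, Rplus_0_r; reflexivity).
    apply RInt_le. lra.
    apply Sf_ex_RInt; auto.
    apply (ex_RInt_continuous (V:=R_CompleteNormedModule)). intros; apply (continuous_plus (V:=R_NormedModule) (fun x => x) (fun _ => - 0)).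
    apply continuous_id. apply continuous_const.
    intros x Hx.
    assert (Hsx : 0 <= sin x) by (apply sin_ge_0; lra).
    replace (x - 0) with (asin (sin x)) by (rewrite asin_sin; lra).
    apply asin_le; pose proof (SIN_bound x); nra.
Qed.

Lemma S_0 : S 0 = 0.
Proof.
  unfold S. rewrite (RInt_ext _ (fun _ => 0)).
  rewrite RInt_const. unfold scal; simpl; unfold mult; simpl; ring.
  intros x _. rewrite Rmult_0_l. apply asin_0.
Qed.

Lemma S_cont0 eps : 0 < eps -> exists d, 0 < d /\ forall x, Rabs x < d -> Rabs (S x) < eps.
Proof.
  intros He.
  assert (Hc : continuous S 0).
  { apply (ex_derive_continuous (K:=R_AbsRing) (V:=R_NormedModule)). eexists. apply S_deriv. lra. }
  destruct (Hc _ (locally_ball (S 0) (mkposreal eps He))) as [d Hd].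
  exists d. split. apply cond_pos. intros x Hx.
  specialize (Hd x). rewrite S_0 in Hd.
  unfold ball in Hd; simpl in Hd; unfold AbsRing_ball, abs, minus, plus, opp in Hd; simpl in Hd.
  rewrite Ropp_0, !Rplus_0_r in Hd. apply Hd. auto.
Qed.


Lemma Lam_value y : 0 < y < 1 -> Lam y = PI^2/8.
Proof.
  intros Hy. pose proof PI_RGT_0 as Hpi.
  destruct (Req_dec (Lam y) (PI^2/8)) as [|Hne]; auto. exfalso.
  set (eps := Rabs (Lam y - PI^2/8)).
  assert (He : 0 < eps) by (apply Rabs_pos_lt; lra).
  destruct (S_cont0 (eps/3) ltac:(lra)) as [d1 [Hd1 HS0]].
  set (d := Rmin (eps / 3 * (2 / PI)) (PI/2)).
  assert (Hd : 0 < d <= PI/2).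
  { unfold d. split. apply Rmin_pos. apply Rmult_lt_0_compat. lra. apply Rdiv_lt_0_compat; lra. lra. apply Rmin_r. }
  assert (Hcd : cos d < 1).
  { rewrite <- cos_0. apply cos_decreasing_1; lra. }
  assert (Hcd0 : 0 <= cos d) by (apply cos_ge_0; lra).
  set (b := (1 - cos d) / (1 + cos d)).
  assert (Hb : 0 < b) by (apply Rdiv_lt_0_compat; lra).
  set (x := Rmin (Rmin ((eps/9)^2/2) b) (Rmin (/2) (d1/2))).
  assert (Hx0 : 0 < x).
  { unfold x. repeat apply Rmin_pos; try lra. apply Rdiv_lt_0_compat; try lra. apply pow_lt; lra. }
  assert (Hx1 : x <= (eps/9)^2/2) by (unfold x; eapply Rle_trans; [apply Rmin_l|apply Rmin_l]).
  assert (Hx2 : x <= b) by (unfold x; eapply Rle_trans; [apply Rmin_l|apply Rmin_r]).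
  assert (Hx3 : x <= /2) by (unfold x; eapply Rle_trans; [apply Rmin_r|apply Rmin_l]).
  assert (Hx4 : x <= d1/2) by (unfold x; eapply Rle_trans; [apply Rmin_r|apply Rmin_r]).
  assert (HLx : Lam x = Lam y) by (apply Lam_const; lra).
  assert (B1 : Rabs (S x) < eps/3) by (apply HS0; rewrite Rabs_right; lra).
  set (x' := (1 - x) / (1 + x)).
  assert (Hx'1 : cos d <= x').
  { unfold x'. apply Rmult_le_reg_r with (1 + x). lra. unfold Rdiv. rewrite Rmult_assoc, Rinv_l by lra.
    unfold b in Hx2. apply Rmult_le_compat_r with (r := 1 + cos d) in Hx2. 2: lra.
    unfold Rdiv in Hx2. rewrite Rmult_assoc, Rinv_l in Hx2 by lra. nra. }
  assert (Hx'2 : x' < 1).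
  { unfold x'. apply Rmult_lt_reg_r with (1 + x). lra. unfold Rdiv. rewrite Rmult_assoc, Rinv_l by lra. lra. }
  destruct (S_bounds x' d ltac:(lra) ltac:(lra)) as [Sb1 Sb2].
  assert (B2 : PI/2 * d <= eps/3).
  { unfold d. pose proof (Rmin_l (eps / 3 * (2 / PI)) (PI/2)).
    apply Rle_trans with (PI/2 * (eps/3 * (2/PI))). apply Rmult_le_compat_l; lra.
    right. field. lra. }
  assert (B3 : Rabs (/ 2 * ln x * L x) < eps/3).
  { eapply Rle_lt_trans. apply log_term_bound. lra.
    assert (sqrt x < eps/9).
    { rewrite <- (sqrt_pow2 (eps/9)) by lra. apply sqrt_lt_1_alt. split. lra.
      assert (0 < (eps/9)^2) by (apply pow_lt; lra). lra. }
    lra. }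
  assert (Lam x = S x + S x' - / 2 * ln x * L x) by reflexivity.
  unfold eps in *.
  apply Rabs_def2 in B1. apply Rabs_def2 in B3.
  destruct (Rle_dec (Lam y) (PI^2/8)).
  - rewrite Rabs_left1 in * by lra. lra.
  - rewrite Rabs_right in * by lra. lra.
Qed.


Definition fI (u : R) := u - arcosh (sinh u).
Definition U (t : R) := - / 2 * ln (t * (1 - t) / (1 + t)).
Definition cc := sqrt 2 - 1.

Lemma cc_facts : 0 < cc /\ cc < / 2 /\ cc * cc = 3 - 2 * sqrt 2 /\ (1 + sqrt 2) * cc = 1.
Proof.
  unfold cc. pose proof (sqrt_sqrt 2 ltac:(lra)). pose proof (sqrt_lt_R0 2 ltac:(lra)).
  assert (1 < sqrt 2).
  { rewrite <- sqrt_1. apply sqrt_lt_1_alt. lra. }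
  assert (sqrt 2 < 3/2) by nra.
  repeat split; nra.
Qed.

Lemma fU t : 0 < t <= cc -> fI (U t) = L t.
Proof.
  intros Ht. destruct cc_facts as [Hc1 [Hc2 [Hc3 Hc4]]].
  pose proof (sqrt_sqrt 2 ltac:(lra)) as H2. pose proof (sqrt_lt_R0 2 ltac:(lra)) as H2'.
  set (p := t * (1 - t) / (1 + t)).
  assert (Hp : 0 < p) by (unfold p; apply Rdiv_lt_0_compat; nra).
  set (q := sqrt p).
  assert (Hq : 0 < q) by (apply sqrt_lt_R0; auto).
  assert (Hqq : q * q = p) by (apply sqrt_sqrt; lra).
  assert (HU : U t = - ln q) by (unfold U, q; fold p; rewrite ln_sqrt by auto; field).
  unfold fI. rewrite HU.
  assert (Hsh : sinh (- ln q) = (/ q - q) / 2).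
  { unfold sinh. rewrite Ropp_involutive, exp_Ropp, exp_ln by auto. reflexivity. }
  rewrite Hsh. unfold arcosh.
  assert (Hw : 0 <= 1 - 2 * t - t * t).
  { unfold cc in Ht. nra. }
  assert (Hsq : sqrt (((/ q - q) / 2) ^ 2 - 1) = (1 - 2 * t - t * t) / (2 * (1 + t) * q)).
  { assert (Heq : (1 - 2 * t - t * t) / (2 * (1 + t) * q) * ((1 - 2 * t - t * t) / (2 * (1 + t) * q))
                 = ((/ q - q) / 2) ^ 2 - 1).
    { replace (((/ q - q) / 2) ^ 2 - 1) with (((1 - q*q)^2 - 4 * (q*q)) / (4 * (q*q))) by (field; lra).
      replace ((1 - 2 * t - t * t) / (2 * (1 + t) * q) * ((1 - 2 * t - t * t) / (2 * (1 + t) * q)))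
        with ((1 - 2 * t - t * t)^2 / (4 * (1 + t)^2 * (q*q))) by (field; lra).
      rewrite Hqq. unfold p. field. repeat split; lra. }
    apply sqrt_lem_1.
    - rewrite <- Heq. apply Rle_0_sqr.
    - apply Rdiv_le_0_compat; nra.
    - exact Heq. }
  rewrite Hsq.
  replace ((/ q - q) / 2 + (1 - 2 * t - t * t) / (2 * (1 + t) * q)) with ((1 - t) * / ((1 + t) * q)).
  2:{ replace ((/ q - q) / 2) with ((1 - q*q) / (2 * q)) by (field; lra). rewrite Hqq. unfold p. field. repeat split; lra. }
  rewrite ln_mult, ln_Rinv, ln_mult; try lra.
  2: apply Rmult_lt_0_compat; lra.
  2: apply Rinv_0_lt_compat, Rmult_lt_0_compat; lra.
  unfold L. ring.
Qed.

Lemma tB_exists e : 0 < e < cc * cc ->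
  exists t, 0 < t < cc /\ t * (1 - t) / (1 + t) = e /\ t <= 3 * e.
Proof.
  intros He. destruct cc_facts as [Hc1 [Hc2 [Hc3 Hc4]]].
  pose proof (sqrt_sqrt 2 ltac:(lra)) as H2. pose proof (sqrt_lt_R0 2 ltac:(lra)) as H2'.
  set (D := (1 - e)^2 - 4 * e).
  assert (HD : 0 < D).
  { unfold D. assert (e < 3 - 2 * sqrt 2) by lra. nra. }
  set (s := sqrt D).
  assert (Hs : 0 < s) by (apply sqrt_lt_R0; auto).
  assert (Hss : s * s = D) by (apply sqrt_sqrt; lra).
  assert (He1 : e < 1) by nra.
  assert (Hs1 : s < 1 - e) by (unfold D in Hss; nra).
  set (t := ((1 - e) - s) / 2).
  assert (Hroot : t * t + (e - 1) * t + e = 0) by (unfold t; unfold D in Hss; nra).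
  assert (Ht0 : 0 < t) by (unfold t; lra).
  assert (Htt : t * t < cc * cc).
  { assert (t * ((1 - e + s)/2) = e) by (unfold t; unfold D in Hss; nra).
    assert (t <= (1 - e + s)/2) by (unfold t; lra). nra. }
  assert (Htc : t < cc) by nra.
  exists t. split. lra. split.
  - apply Rmult_eq_reg_r with (1 + t). 2: lra. unfold Rdiv. rewrite Rmult_assoc, Rinv_l by lra. nra.
  - nra.
Qed.


Definition Phi (t : R) := S t - (L t)^2 / 4.
Definition dPhi (t : R) := L t / (2 * t) - L t / 2 * (/ (1 + t) + / (1 - t)).
Definition dU (t : R) := - / 2 * (/ t - / (1 - t) - / (1 + t)).

Lemma cont_of_ex_derive (f : R -> R) x : ex_derive f x -> continuous f x.
Proof. intros H. apply (ex_derive_continuous (K:=R_AbsRing) (V:=R_NormedModule)). exact H. Qed.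

Lemma Phi_deriv t : 0 < t < 1 -> is_derive Phi t (dPhi t).
Proof.
  intros Ht.
  assert (H1 := S_deriv' t Ht).
  assert (H2 : is_derive (fun y => (L y)^2 / 4) t (L t / 2 * (/ (1 + t) + / (1 - t)))).
  { unfold L. auto_derive. repeat split; lra. unfold Rminus. field. lra. }
  assert (H := is_derive_minus _ _ t _ _ H1 H2).
  unfold Phi, dPhi. exact H.
Qed.

Lemma dPhi_cont t : 0 < t < 1 -> continuous dPhi t.
Proof.
  intros Ht. apply cont_of_ex_derive. unfold dPhi, L. auto_derive. repeat split; lra.
Qed.

Lemma U_deriv t : 0 < t < 1 -> is_derive U t (dU t).
Proof.
  intros Ht. unfold U, dU. auto_derive.
  - split. lra. split; auto. apply Rmult_lt_0_compat. nra. apply Rinv_0_lt_compat; lra.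
  - field. repeat split; lra.
Qed.

Lemma dU_cont t : 0 < t < 1 -> continuous dU t.
Proof.
  intros Ht. apply cont_of_ex_derive. unfold dU. auto_derive. repeat split; lra.
Qed.

Lemma sinh_pos u : 0 < u -> 0 < sinh u.
Proof.
  intros Hu. unfold sinh. assert (exp (- u) < exp u) by (apply exp_increasing; lra). lra.
Qed.

Lemma fI_cont u : 0 < u -> continuous fI u.
Proof.
  intros Hu. unfold fI, arcosh.
  apply (continuous_plus (V:=R_NormedModule) (fun u => u) (fun u => - ln (sinh u + sqrt (sinh u ^ 2 - 1)))).
  apply continuous_id.
  apply (continuous_opp (V:=R_NormedModule) (fun u => ln (sinh u + sqrt (sinh u ^ 2 - 1)))).
  apply (continuous_comp (fun u => sinh u + sqrt (sinh u ^ 2 - 1)) ln).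
  - apply (continuous_plus (V:=R_NormedModule) sinh (fun u => sqrt (sinh u ^ 2 - 1))).
    apply cont_of_ex_derive. unfold sinh. auto_derive. auto.
    apply continuous_sqrt_comp. apply cont_of_ex_derive. unfold sinh. auto_derive. auto.
  - apply continuous_ln. pose proof (sinh_pos u Hu). pose proof (sqrt_pos (sinh u ^ 2 - 1)). lra.
Qed.

Lemma U_pos t : 0 < t < 1 -> 0 < U t.
Proof.
  intros Ht. unfold U.
  assert (ln (t * (1 - t) / (1 + t)) < 0).
  { rewrite <- ln_1. apply ln_increasing. apply Rdiv_lt_0_compat; nra.
    apply Rmult_lt_reg_r with (1 + t). lra. unfold Rdiv. rewrite Rmult_assoc, Rinv_l by lra. nra. }
  lra.
Qed.

Lemma U_cc : U cc = ln (1 + sqrt 2).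
Proof.
  destruct cc_facts as [Hc1 [Hc2 [Hc3 Hc4]]].
  pose proof (sqrt_lt_R0 2 ltac:(lra)) as H2'.
  unfold U.
  replace (cc * (1 - cc) / (1 + cc)) with (cc * cc).
  2:{ assert (Hq : cc * cc + 2 * cc - 1 = 0) by (rewrite Hc3; unfold cc; ring).
      field_simplify_eq. 2: lra. nra. }
  rewrite ln_mult by lra.
  replace cc with (/ (1 + sqrt 2)).
  2:{ apply Rmult_eq_reg_l with (1 + sqrt 2). rewrite Rinv_r by lra. lra. lra. }
  rewrite ln_Rinv by lra. field.
Qed.

Lemma integral_piece t : 0 < t < cc -> is_RInt fI (ln (1 + sqrt 2)) (U t) (Phi cc - Phi t).
Proof.
  intros Ht. destruct cc_facts as [Hc1 [Hc2 [Hc3 Hc4]]].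
  assert (Hint : forall x, Rmin t cc <= x <= Rmax t cc -> 0 < x < 1 /\ 0 < x <= cc).
  { intros x Hx. rewrite Rmin_left, Rmax_right in Hx by lra. lra. }
  assert (HC := is_RInt_comp (V:=R_CompleteNormedModule) fI U dU t cc).
  assert (HC' : is_RInt (fun y => scal (dU y) (fI (U y))) t cc (RInt fI (U t) (U cc))).
  { apply HC.
    - intros x Hx. apply fI_cont, U_pos. apply Hint; auto.
    - intros x Hx. split. apply U_deriv, Hint; auto. apply dU_cont, Hint; auto. }
  assert (HD : is_RInt (fun y => scal (dU y) (fI (U y))) t cc (minus ((fun y => - Phi y) cc) ((fun y => - Phi y) t))).
  { apply (is_RInt_ext (V:=R_CompleteNormedModule) (fun y => - dPhi y)).
    - intros x Hx. rewrite Rmin_left, Rmax_right in Hx by lra.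
      rewrite fU by lra. unfold scal; simpl; unfold mult; simpl. unfold dPhi, dU. field. repeat split; lra.
    - apply (is_RInt_derive (V:=R_CompleteNormedModule) (fun y => - Phi y)).
      + intros x Hx. apply (is_derive_opp Phi). apply Phi_deriv, Hint; auto.
      + intros x Hx. apply (continuous_opp (V:=R_NormedModule) dPhi). apply dPhi_cont, Hint; auto. }
  assert (Heq : RInt fI (U t) (U cc) = Phi t - Phi cc).
  { apply (is_RInt_unique (V:=R_CompleteNormedModule)) in HD.
    apply (is_RInt_unique (V:=R_CompleteNormedModule)) in HC'. rewrite <- HC', HD.
    unfold minus, plus, opp; simpl. ring. }
  rewrite U_cc in Heq.
  assert (Hex : ex_RInt fI (ln (1 + sqrt 2)) (U t)).
  { apply (ex_RInt_continuous (V:=R_CompleteNormedModule)). intros z Hz.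
    apply fI_cont. rewrite <- U_cc in Hz. pose proof (U_pos cc ltac:(lra)). pose proof (U_pos t ltac:(lra)).
    destruct (Rle_dec (U cc) (U t)); [rewrite Rmin_left in Hz by lra | rewrite Rmin_right in Hz by lra]; lra. }
  replace (Phi cc - Phi t) with (RInt fI (ln (1 + sqrt 2)) (U t)).
  apply (RInt_correct (V:=R_CompleteNormedModule)). exact Hex.
  rewrite <- (opp_RInt_swap (V:=R_CompleteNormedModule)). rewrite Heq. unfold opp; simpl. ring.
  apply (ex_RInt_swap (V:=R_CompleteNormedModule)). exact Hex.
Qed.


Lemma Phi_cc : Phi cc = PI ^ 2 / 16 - / 2 * (ln (1 + sqrt 2)) ^ 2.
Proof.
  destruct cc_facts as [Hc1 [Hc2 [Hc3 Hc4]]].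
  pose proof (sqrt_lt_R0 2 ltac:(lra)) as H2'.
  assert (Hd : (1 - cc) / (1 + cc) = cc).
  { assert (Hq : cc * cc + 2 * cc - 1 = 0) by (rewrite Hc3; unfold cc; ring).
    field_simplify_eq. 2: lra. nra. }
  assert (HL : L cc = - ln cc).
  { rewrite <- (L_dual cc) by lra. rewrite Hd. reflexivity. }
  assert (Hln : ln cc = - ln (1 + sqrt 2)).
  { replace cc with (/ (1 + sqrt 2)).
    2:{ apply Rmult_eq_reg_l with (1 + sqrt 2). rewrite Rinv_r by lra. lra. lra. }
    apply ln_Rinv. lra. }
  assert (HV := Lam_value cc ltac:(lra)).
  unfold Lam in HV. rewrite Hd, HL, Hln in HV.
  unfold Phi. rewrite HL, Hln. nra.
Qed.

Lemma Phi_0 : Phi 0 = 0.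
Proof.
  unfold Phi, L. rewrite S_0. rewrite Rplus_0_r, Rminus_0_r, ln_1. field.
Qed.

Lemma Phi_cont0 eps : 0 < eps -> exists d, 0 < d /\ forall x, Rabs x < d -> Rabs (Phi x) < eps.
Proof.
  intros He.
  assert (Hc : continuous Phi 0).
  { apply cont_of_ex_derive. unfold Phi.
    apply (ex_derive_minus (V:=R_NormedModule) S (fun t => (L t)^2/4)).
    eexists. apply S_deriv. lra.
    unfold L. auto_derive. repeat split; lra. }
  destruct (Hc _ (locally_ball (Phi 0) (mkposreal eps He))) as [d Hd].
  exists d. split. apply cond_pos. intros x Hx.
  specialize (Hd x). rewrite Phi_0 in Hd.
  unfold ball in Hd; simpl in Hd; unfold AbsRing_ball, abs, minus, plus, opp in Hd; simpl in Hd.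
  rewrite Ropp_0, !Rplus_0_r in Hd. apply Hd. auto.
Qed.

Theorem theorem2 :
  is_RInt_gen (fun u : R => u - arcosh (sinh u))
    (at_point (arsinh 1)) (Rbar_locally p_infty)
    (PI ^ 2 / 16 - / 2 * (ln (1 + sqrt 2)) ^ 2).
Proof.
  destruct cc_facts as [Hc1 [Hc2 [Hc3 Hc4]]].
  pose proof (sqrt_lt_R0 2 ltac:(lra)) as H2'.
  replace (arsinh 1) with (ln (1 + sqrt 2)).
  2:{ unfold arsinh. f_equal. f_equal. f_equal. ring. }
  rewrite <- Phi_cc.
  intros P [eps HP].
  destruct (Phi_cont0 eps (cond_pos eps)) as [d [Hd HPhi]].
  set (a := ln (1 + sqrt 2)).
  set (M := Rmax a (- / 2 * ln (d / 3))).
  apply (Filter_prod _ _ _ (fun x => x = a) (fun y => M < y)).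
  - reflexivity.
  - exists M. auto.
  - intros x B -> HB.
    assert (HBa : a < B) by (pose proof (Rmax_l a (- / 2 * ln (d / 3))); fold M in H; lra).
    assert (HBd : - / 2 * ln (d / 3) < B) by (pose proof (Rmax_r a (- / 2 * ln (d / 3))); fold M in H; lra).
    set (e := exp (-2 * B)).
    assert (He0 : 0 < e) by apply exp_pos.
    assert (He1 : e < cc * cc).
    { assert (Hcc : cc * cc = exp (-2 * a)).
      { unfold a. replace (-2 * ln (1 + sqrt 2)) with (ln (/ (1 + sqrt 2)) + ln (/ (1 + sqrt 2))).
        2:{ rewrite ln_Rinv by lra. ring. }
        rewrite exp_plus, exp_ln. 2: apply Rinv_0_lt_compat; lra.
        replace (/ (1 + sqrt 2)) with cc. reflexivity.
        apply Rmult_eq_reg_l with (1 + sqrt 2). rewrite Rinv_r by lra. lra. lra. }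
      rewrite Hcc. unfold e. apply exp_increasing. lra. }
    assert (He2 : 3 * e < d).
    { assert (e < d / 3).
      { rewrite <- (exp_ln (d / 3)) by lra. unfold e. apply exp_increasing. lra. }
      lra. }
    destruct (tB_exists e (conj He0 He1)) as [t [Ht [Hte Ht3]]].
    assert (HUt : U t = B).
    { unfold U. rewrite Hte. unfold e. rewrite ln_exp. field. }
    exists (Phi cc - Phi t). split.
    + simpl. rewrite <- HUt. apply integral_piece. lra.
    + apply HP. unfold ball; simpl; unfold AbsRing_ball, abs, minus, plus, opp; simpl.
      replace (Phi cc - Phi t + - Phi cc) with (- Phi t) by ring.
      rewrite Rabs_Ropp. apply HPhi. rewrite Rabs_right; lra.
Qed.
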